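(* Let $X$ be a complex Banach space and let $1\leq p<q\leq\infty$. Then $\Pi^{\mathcal{B}}_p(\mathbb{D},X)\subseteq\Pi^{\mathcal{B}}_q(\mathbb{D},X)$ and $\pi^{\mathcal{B}}_q(f)\leq\pi^{\mathcal{B}}_p(f)$ for all $f\in\Pi^{\mathcal{B}}_p(\mathbb{D},X)$. Moreover, $\Pi^{\mathcal{B}}_\infty(\mathbb{D},X)=\mathcal{B}(\mathbb{D},X)$ and $\pi^{\mathcal{B}}_\infty(f)=p_{\mathcal{B}}(f)$ for all $f\in\Pi^{\mathcal{B}}_\infty(\mathbb{D},X)$.
   Context: $\mathbb{D}=\{z\in\mathbb{C}:|z|<1\}$. For a complex Banach space $X$, $\mathcal{H}(\mathbb{D},X)$ is the space of holomorphic maps $\mathbb{D}\to X$. For $f\in\mathcal{H}(\mathbb{D},X)$ let $p_{\mathcal{B}}(f)=\sup_{z\in\mathbb{D}}(1-|z|^2)\|f'(z)\|$; $\mathcal{B}(\mathbb{D},X)$ is the space of $f\in\mathcal{H}(\mathbb{D},X)$ with $p_{\mathcal{B}}(f)<\infty$, and $\widehat{\mathcal{B}}(\mathbb{D},X)=\{f\in\mathcal{B}(\mathbb{D},X): f(0)=0\}$, a Banach space with norm $p_{\mathcal{B}}$. Write $\widehat{\mathcal{B}}(\mathbb{D})=\widehat{\mathcal{B}}(\mathbb{D},\mathbb{C})$ and $B_{\widehat{\mathcal{B}}(\mathbb{D})}$ for its closed unit ball. For $1\leq p<\infty$, a map $f\in\mathcal{H}(\mathbb{D},X)$ is called $p$-summing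 Bloch if there is $c\geq0$ such that for all $n\in\mathbb{N}$, $\lambda_1,\dots,\lambda_n\in\mathbb{C}$, $z_1,\dots,z_n\in\mathbb{D}$: $\left(\sum_{i=1}^n|\lambda_i|^p\|f'(z_i)\|^p\right)^{1/p}\leq c\sup_{g\in B_{\widehat{\mathcal{B}}(\mathbb{D})}}\left(\sum_{i=1}^n|\lambda_i|^p|g'(z_i)|^p\right)^{1/p}$; for $p=\infty$ the condition is $\max_{i}|\lambda_i|\|f'(z_i)\|\leq c\sup_{g\in B_{\widehat{\mathcal{B}}(\mathbb{D})}}\max_i|\lambda_i||g'(z_i)|$. The least such $c$ is denoted $\pi^{\mathcal{B}}_p(f)$, and $\Pi^{\mathcal{B}}_p(\mathbb{D},X)$ denotes the space of all $p$-summing Bloch maps $\mathbb{D}\to X$. *)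

(* Defs.v *)
From HB Require Import structures.
From mathcomp Require Import all_boot all_order all_algebra.
From mathcomp Require Import all_classical all_reals all_analysis.
From mathcomp Require Import complex.
Set Implicit Arguments. Unset Strict Implicit. Unset Printing Implicit Defensive.
Import Order.TTheory GRing.Theory Num.Theory numFieldNormedType.Exports.
Local Open Scope ring_scope.
Local Open Scope complex_scope.
Local Open Scope classical_set_scope.

Section Defs.
Variable R : realType.
Local Notation K := R[i].
Local Notation C := (R[i])^o.

(* real value of a (real-valued) complex norm *)
Definition rnorm (V : normedModType K) (x : V) : R := complex.Re `|x|.

Definition disc : set C := [set z : C | `|z| < 1].

Definition holomorphic (X : normedModType K) (f : C -> X) : Prop :=
  forall z : C, disc z -> derivable f z 1.

Definition bloch_val (X : normedModType K) (f : C -> X) (z : C) : R :=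
  (1 - rnorm z ^+ 2) * rnorm ('D_1 f z).

Definition pB (X : normedModType K) (f : C -> X) : R :=
  sup [set bloch_val f z | z in disc].

Definition Bloch (X : normedModType K) : set (C -> X) :=
  [set f | holomorphic f /\ exists M : R, forall z, disc z -> bloch_val f z <= M].

Definition hatBloch_ball : set (C -> C) :=
  [set g : C -> C | Bloch g /\ g 0 = 0 /\ pB g <= 1].

Definition lpnorm (p : \bar R) (n : nat) (a : 'I_n -> R) : R :=
  match p with
  | EFin r => (\sum_(i < n) a i `^ r) `^ r^-1
  | _ => \big[Num.max/0]_(i < n) a i
  end.

Definition summing_const (X : normedModType K) (p : \bar R) (f : C -> X) (c : R) : Prop :=
  0 <= c /\
  forall (n : nat) (lam : 'I_n -> C) (z : 'I_n -> C), (forall i, disc (z i)) ->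
    lpnorm p (fun i => rnorm (lam i) * rnorm ('D_1 f (z i))) <=
    c * sup [set lpnorm p (fun i => rnorm (lam i) * rnorm ('D_1 g (z i))) | g in hatBloch_ball].

Definition PiB (X : normedModType K) (p : \bar R) : set (C -> X) :=
  [set f | holomorphic f /\ exists c, summing_const p f c].

Definition piB (X : normedModType K) (p : \bar R) (f : C -> X) : R :=
  inf [set c | summing_const p f c].
End Defs.

(* Main.v *)
Require Import Defs.
From HB Require Import structures.
From mathcomp Require Import all_boot all_order all_algebra.
From mathcomp Require Import all_classical all_reals all_analysis.
From mathcomp Require Import complex.
From mathcomp Require Import ring lra.
Import Order.TTheory GRing.Theory Num.Theory numFieldNormedType.Exports.
Local Open Scope ring_scope.
Local Open Scope classical_set_scope.
Set Implicit Arguments. Unset Strict Implicit.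

Section S.
Variable R : realType.

Lemma powRK (u s : R) : 0 <= u -> 0 < s -> (u `^ s^-1) `^ s = u.
Proof. by move=> u0 s0; rewrite -powRrM mulVf ?gt_eqF // powRr1. Qed.

Lemma holder_n n (x y : 'I_n -> R) (s s' : R) :
  (forall i, 0 <= x i) -> (forall i, 0 <= y i) -> 0 < s -> 0 < s' ->
  s^-1 + s'^-1 = 1 ->
  \sum_i x i * y i <= (\sum_i x i `^ s) `^ s^-1 * (\sum_i y i `^ s') `^ s'^-1.
Proof.
move=> x0 y0 s0 s'0 ss; elim: n x y x0 y0 => [|n IH] x y x0 y0.
  by rewrite !big_ord0 mulr_ge0 // powR_ge0.
rewrite !big_ord_recr /=.
have H := IH (fun i => x (widen_ord (leqnSn n) i)) (fun i => y (widen_ord (leqnSn n) i))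
  (fun i => x0 _) (fun i => y0 _).
apply: le_trans; first exact: (lerD H (lexx _)).
have Sx : 0 <= \sum_(i < n) x (widen_ord (leqnSn n) i) `^ s by apply: sumr_ge0 => i _; apply: powR_ge0.
have Sy : 0 <= \sum_(i < n) y (widen_ord (leqnSn n) i) `^ s' by apply: sumr_ge0 => i _; apply: powR_ge0.
have := hoelder2 (powR_ge0 ((\sum_(i < n) x (widen_ord (leqnSn n) i) `^ s)) s^-1) (x0 ord_max)
  (powR_ge0 ((\sum_(i < n) y (widen_ord (leqnSn n) i) `^ s')) s'^-1) (y0 ord_max) s0 s'0 ss.
by rewrite !powRK.
Qed.

Lemma holder_key n (p q : R) (a : 'I_n -> R) : 1 <= p -> p < q -> (forall i, 0 <= a i) ->
  (forall b : 'I_n -> R, (forall i, 0 <= b i) ->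
   (\sum_i (b i * a i `^ (q/p - 1)) `^ p) `^ p^-1 <=
     (\sum_i b i `^ q) `^ q^-1 * (\sum_i a i `^ q) `^ (p^-1 - q^-1))
 /\ (\sum_i (a i * a i `^ (q/p - 1)) `^ p) `^ p^-1 = (\sum_i a i `^ q) `^ p^-1.
Proof.
move=> p1 pq a0.
have p0 : 0 < p by apply: lt_le_trans p1.
have q0 : 0 < q by apply: lt_trans pq.
have qp0 : 0 < q - p by rewrite subr_gt0.
have pn0 : p != 0 by rewrite gt_eqF.
have qn0 : q != 0 by rewrite gt_eqF.
have qpn0 : q - p != 0 by rewrite gt_eqF.
have qp1 : 0 < q / p by rewrite divr_gt0.
have aq i : (a i * a i `^ (q/p - 1)) `^ p = a i `^ q.
  by rewrite mulr_powRB1 // -powRrM divfK.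
split; last by under eq_bigr do rewrite aq.
move=> b b0.
pose s := q / p; pose s' := q / (q - p).
have s0 : 0 < s by [].
have s'0 : 0 < s' by rewrite divr_gt0.
have ss : s^-1 + s'^-1 = 1.
  by rewrite /s /s' !invf_div; field; rewrite qn0.
have := @holder_n n (fun i => b i `^ p) (fun i => (a i `^ (q/p - 1)) `^ p)
  s s' (fun i => powR_ge0 _ _) (fun i => powR_ge0 _ _) s0 s'0 ss.
have E1 i : (b i `^ p) `^ s = b i `^ q by rewrite -powRrM /s mulrC mulfVK.
have E2 i : ((a i `^ (q/p - 1)) `^ p) `^ s' = a i `^ q.
  rewrite -!powRrM; congr (_ `^ _); rewrite /s'; field.
  by rewrite qpn0 pn0.
move=> H.
rewrite (eq_bigr _ (fun i _ => E1 i)) (eq_bigr _ (fun i _ => E2 i)) in H.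
have E3 : \sum_i b i `^ p * (a i `^ (q/p-1)) `^ p = \sum_i (b i * a i `^ (q/p-1)) `^ p.
  by apply: eq_bigr => j _; rewrite powRM ?powR_ge0.
rewrite E3 in H.
have Sb : 0 <= \sum_i b i `^ q by apply: sumr_ge0 => i _; apply: powR_ge0.
have Sa : 0 <= \sum_i a i `^ q by apply: sumr_ge0 => i _; apply: powR_ge0.
have L0 : 0 <= \sum_i (b i * a i `^ (q / p - 1)) `^ p.
  by apply: sumr_ge0 => j _; apply: powR_ge0.
have R0 : 0 <= (\sum_(i < n) b i `^ q) `^ s^-1 * (\sum_(i < n) a i `^ q) `^ s'^-1.
  by apply: mulr_ge0; apply: powR_ge0.
have pi0 : 0 <= p^-1 by rewrite invr_ge0 ltW.
have := ge0_ler_powR pi0 L0 R0 H.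
rewrite powRM ?powR_ge0 // -!powRrM.
have -> : s^-1 * p^-1 = q^-1.
  rewrite /s invf_div; field.
  by rewrite qn0 pn0.
have -> : s'^-1 * p^-1 = p^-1 - q^-1.
  rewrite /s' invf_div; field.
  by rewrite qn0 pn0.
by [].
Qed.
End S.

Section S.
Variable R : realType.
Local Notation C := (R[i])^o.

Lemma rnormE (V : normedModType R[i]) (x : V) : `|x| = (rnorm x)%:C%C.
Proof.
have := normr_ge0 x. rewrite /rnorm. case: `|x| => a b. rewrite lecE /= => /andP[/eqP -> _]. by [].
Qed.

Lemma rnorm_ge0 (V : normedModType R[i]) (x : V) : 0 <= rnorm x.
Proof. by have := normr_ge0 x; rewrite rnormE lecR. Qed.

Lemma rnormZ (V : normedModType R[i]) (k : C) (x : V) : rnorm (k *: x) = rnorm k * rnorm x.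
Proof.
have := normrZ k x. rewrite !rnormE -rmorphM. by case.
Qed.

Lemma rnormM (k x : C) : rnorm (k * x) = rnorm k * rnorm x.
Proof. exact: (@rnormZ C k x). Qed.

Lemma rnorm2 (z : C) : rnorm z ^+ 2 = complex.Re z ^+ 2 + complex.Im z ^+ 2.
Proof.
rewrite /rnorm normc_def /= sqr_sqrtr //. by rewrite addr_ge0 // sqr_ge0.
Qed.

Lemma discP (z : C) : disc z <-> rnorm z < 1.
Proof. by rewrite /disc /= rnormE ltcR. Qed.

Lemma rnormC (r : R) : rnorm (r%:C%C : C) = `|r|.
Proof.
rewrite /rnorm normc_def /= expr0n /= addr0 sqrtr_sqr. by [].
Qed.
End S.

Section S.
Variable R : realType.
Local Notation C := (R[i])^o.

Definition den (a w : C) : C := 1 - (a^*)%C * w.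
Definition mob (a : C) : C -> C :=
  fun w => ((1 - rnorm a ^+ 2)%:C%C * w) * (den a w)^-1.

Lemma mob_derive (a w : C) : den a w != 0 ->
  is_derive w (1 : C) (mob a) ((1 - rnorm a ^+ 2)%:C%C / (den a w) ^+ 2).
Proof.
rewrite /den => hw.
set k : C := (1 - rnorm a ^+ 2)%:C%C.
pose h : C -> C := (cst 1 - (a^*)%C \*: (@id C)).
have hE y : h y = 1 - (a^*)%C * y by [].
have Dh : is_derive w (1 : C) h (0 - (a^*)%C *: (1:C)).
  by apply: is_deriveB; apply: is_deriveZ.
have Dhi : is_derive w (1 : C) (fun y => (h y)^-1) (- (h w) ^- 2 *: (0 - (a^*)%C *: (1:C))).
  apply: DeriveDef; first by apply: derivableV => //; apply: ex_derive.
  by rewrite deriveV // derive_val.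
have Dk : is_derive w (1 : C) (k \*: (@id C)) (k *: 1).
  exact: is_deriveZ.
have := is_deriveM Dk Dhi.
have -> : ((k \*: (@id C)) * (fun y => (h y)^-1)) = mob a by apply/funext => y.
move=> D; apply: (is_derive_eq D).
rewrite /= hE.
rewrite /GRing.scale /= !mulr1.
move: hw; set d := 1 - _ * w => hw.
rewrite /d; field; by rewrite -/d hw.
Qed.

Lemma rnormV (x : C) : rnorm (x^-1) = (rnorm x)^-1.
Proof.
have := normfV x. rewrite !rnormE -fmorphV. by case.
Qed.

Lemma rnormX (x : C) n : rnorm (x ^+ n) = rnorm x ^+ n.
Proof.
elim: n => [|n IH]; first by rewrite !expr0 -[1 : C]/((1:R)%:C%C) rnormC normr1.
by rewrite !exprS rnormM IH.
Qed.

Lemma sq_lt1 (r : R) : 0 <= r -> r < 1 -> r ^+ 2 < 1.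
Proof. move=> r0 r1; rewrite expr2; nra. Qed.

Lemma mob_ineq (a w : C) : rnorm a < 1 -> rnorm w < 1 ->
  (1 - rnorm w ^+ 2) * (1 - rnorm a ^+ 2) <= rnorm (den a w) ^+ 2 /\
  0 < rnorm (den a w) ^+ 2.
Proof.
move=> ha hw.
have ha2 := sq_lt1 (rnorm_ge0 a) ha.
have hw2 := sq_lt1 (rnorm_ge0 w) hw.
move: ha2 hw2; rewrite /den !rnorm2.
case: a {ha} => a1 a2; case: w {hw} => w1 w2 /=.
simpc => ha2 hw2.
have P1 := sqr_ge0 (w1 - a1).
have P2 := sqr_ge0 (w2 - a2).
have P3 : 0 < (1 - (w1 ^+ 2 + w2 ^+ 2)) * (1 - (a1 ^+ 2 + a2 ^+ 2)) by rewrite mulr_gt0 // subr_gt0.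
rewrite !expr2 in P1 P2 P3 *.
split; nra.
Qed.

Lemma mob_eq (a : C) : rnorm (den a a) ^+ 2 = (1 - rnorm a ^+ 2) ^+ 2.
Proof.
rewrite /den !rnorm2. case: a => a1 a2 /=. simpc. ring.
Qed.

Lemma rnorm0 (V : normedModType R[i]) : rnorm (0 : V) = 0.
Proof. by rewrite /rnorm normr0. Qed.

Lemma disc0 : disc (0 : C).
Proof. by apply/discP; rewrite rnorm0. Qed.

Lemma den_neq0 (a w : C) : disc a -> disc w -> den a w != 0.
Proof.
move=> /discP ha /discP hw; have [_ P] := mob_ineq ha hw.
apply/eqP => E; move: P; by rewrite E rnorm0 expr0n ltxx.
Qed.

Lemma bloch_val_mob (a w : C) : disc a -> disc w ->
  bloch_val (mob a) w = (1 - rnorm w ^+ 2) * (1 - rnorm a ^+ 2) / rnorm (den a w) ^+ 2.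
Proof.
move=> da dw.
rewrite /bloch_val (@derive_val _ _ _ _ _ _ _ (mob_derive (den_neq0 da dw))).
rewrite rnormM rnormV rnormX rnormC ger0_norm ?mulrA //.
have /discP ha := da.
by rewrite subr_ge0 ltW // sq_lt1 // rnorm_ge0.
Qed.

Lemma mob_ball (a : C) : disc a -> hatBloch_ball (mob a).
Proof.
move=> da.
have /discP ha := da.
have hb : forall w, disc w -> bloch_val (mob a) w <= 1.
  move=> w dw; have /discP hw := dw.
  rewrite bloch_val_mob //.
  have [I P] := mob_ineq ha hw.
  by rewrite ler_pdivrMr // mul1r.
have hol : holomorphic (mob a).
  by move=> w dw; apply: (@ex_derive _ _ _ _ _ _ _ (mob_derive (den_neq0 da dw))).
split; first by split => //; exists 1.
split; first by rewrite /mob mulr0 mul0r.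
apply: ge_sup; first by exists (bloch_val (mob a) 0), 0 => //; exact: disc0.
by move=> _ [w dw <-]; apply: hb.
Qed.

Lemma mob_D (a : C) : disc a -> (1 - rnorm a ^+ 2) * rnorm ('D_1 (mob a) a) = 1.
Proof.
move=> da; have := bloch_val_mob da da; rewrite /bloch_val => ->.
have /discP ha := da.
have h1 : 0 < 1 - rnorm a ^+ 2 by rewrite subr_gt0 sq_lt1 // rnorm_ge0.
rewrite mob_eq expr2 divff //. by rewrite mulf_neq0 // gt_eqF.
Qed.
End S.

Section S.
Variable R : realType.
Local Notation C := (R[i])^o.

Lemma bigmax_ge n (F : 'I_n -> R) j : F j <= \big[Num.max/0]_(i < n) F i.
Proof.
elim: n F j => [|n IH] F j; first by case: j.
rewrite big_ord_recl /=.
case: (unliftP ord0 j) => [j' ->|->]; last by rewrite le_max lexx.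
apply: le_trans (IH (fun i => F (lift ord0 i)) j') _.
by rewrite le_max lexx orbT.
Qed.

Lemma bigmax_le n (F : 'I_n -> R) M : 0 <= M -> (forall i, F i <= M) ->
  \big[Num.max/0]_(i < n) F i <= M.
Proof.
move=> M0 FM; elim/big_ind: _ => //.
by move=> x y xM yM; rewrite ge_max xM yM.
Qed.

Lemma bigmax_ge0 n (F : 'I_n -> R) : 0 <= \big[Num.max/0]_(i < n) F i.
Proof.
elim: n F => [|n IH] F; first by rewrite big_ord0.
by rewrite big_ord_recl le_max IH orbT.
Qed.

Lemma lpnorm_ge0 p n (u : 'I_n -> R) : 0 <= lpnorm p u.
Proof. by case: p => [r| |] /=; rewrite ?powR_ge0 ?bigmax_ge0. Qed.

Lemma lpnorm_mono p n (u v : 'I_n -> R) : (0 < p)%E ->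
  (forall i, 0 <= u i) -> (forall i, u i <= v i) -> lpnorm p u <= lpnorm p v.
Proof.
case: p => [r| |] //= hr u0 uv.
- have r0 : 0 <= r by rewrite ltW.
  have ri0 : 0 <= r^-1 by rewrite invr_ge0.
  apply: (ge0_ler_powR ri0).
  + by rewrite nnegrE; apply: sumr_ge0 => i _; apply: powR_ge0.
  + by rewrite nnegrE; apply: sumr_ge0 => i _; apply: powR_ge0.
  apply: ler_sum => i _; apply: (ge0_ler_powR r0) => //.
    by rewrite nnegrE.
  by rewrite nnegrE (le_trans (u0 i)).
- apply: bigmax_le; first exact: bigmax_ge0.
  by move=> i; apply: le_trans (uv i) (bigmax_ge _ _).
Qed.

Lemma ball_bound (g : C -> C) (z : C) : hatBloch_ball g -> disc z ->
  rnorm ('D_1 g z) <= (1 - rnorm z ^+ 2)^-1.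
Proof.
move=> [[hol [M HM]] [_ pB1]] dz.
have /discP hz := dz.
have h1 : 0 < 1 - rnorm z ^+ 2 by rewrite subr_gt0 sq_lt1 // rnorm_ge0.
have : bloch_val g z <= pB g.
  apply: sup_upper_bound; last by exists z.
  split; first by exists (bloch_val g z), z.
  by exists M => _ [w dw <-]; apply: HM.
move=> /le_trans /(_ pB1); rewrite /bloch_val.
by rewrite -ler_pdivlMl // mulr1.
Qed.

Definition Sset (p : \bar R) n (lam z : 'I_n -> C) :=
  [set lpnorm p (fun i => rnorm (lam i) * rnorm ('D_1 g (z i))) | g in @hatBloch_ball R].

Lemma ball_nonempty : hatBloch_ball (@mob R 0).
Proof. by apply: mob_ball; apply: disc0. Qed.

Lemma Sset_nonempty p n (lam z : 'I_n -> C) : Sset p lam z !=set0.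
Proof. by exists (lpnorm p (fun i => rnorm (lam i) * rnorm ('D_1 (mob 0) (z i)))), (mob 0) => //; exact: ball_nonempty. Qed.

Lemma Sset_has_sup p n (lam z : 'I_n -> C) : (0 < p)%E -> (forall i, disc (z i)) ->
  has_sup (Sset p lam z).
Proof.
move=> hp dz; split; first exact: Sset_nonempty.
exists (lpnorm p (fun i => rnorm (lam i) * (1 - rnorm (z i) ^+ 2)^-1)).
move=> _ [g gb <-]; apply: lpnorm_mono => // i.
  by rewrite mulr_ge0 // rnorm_ge0.
by rewrite ler_wpM2l ?rnorm_ge0 // ball_bound.
Qed.

Lemma Sset_ub p n (lam z : 'I_n -> C) g : (0 < p)%E -> (forall i, disc (z i)) ->
  hatBloch_ball g ->
  lpnorm p (fun i => rnorm (lam i) * rnorm ('D_1 g (z i))) <= sup (Sset p lam z).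
Proof.
by move=> hp dz gb; apply: sup_upper_bound; [exact: Sset_has_sup | exists g].
Qed.

Lemma Sset_ge0 p n (lam z : 'I_n -> C) : (0 < p)%E -> (forall i, disc (z i)) ->
  0 <= sup (Sset p lam z).
Proof.
move=> hp dz; apply: le_trans (Sset_ub lam hp dz ball_nonempty).
exact: lpnorm_ge0.
Qed.

Lemma Sset_le p n (lam z : 'I_n -> C) M :
  (forall g, hatBloch_ball g -> lpnorm p (fun i => rnorm (lam i) * rnorm ('D_1 g (z i))) <= M) ->
  sup (Sset p lam z) <= M.
Proof.
move=> H; apply: ge_sup; first exact: Sset_nonempty.
by move=> _ [g gb <-]; apply: H.
Qed.

End S.

Section S.
Variable R : realType.
Local Notation C := (R[i])^o.
Variable X : normedModType R[i].

Lemma le_mid (M a b : R) : a <= M -> M <= b -> a <= b.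
Proof. exact: le_trans. Qed.

Lemma rnorm1 : rnorm (1 : C) = 1.
Proof. by rewrite -[1 : C]/((1:R)%:C%C) rnormC normr1. Qed.

Lemma max1 (x : R) : 0 <= x -> \big[Num.max/0]_(i < 1) (fun _ => x) i = x.
Proof. by move=> x0; rewrite big_ord_recl big_ord0 /= max_l. Qed.

Lemma inf_to_bloch (f : C -> X) c : summing_const +oo%E f c ->
  forall z, disc z -> bloch_val f z <= c.
Proof.
move=> [c0 H] z dz.
have /discP hz := dz.
have h1 : 0 < 1 - rnorm z ^+ 2 by rewrite subr_gt0 sq_lt1 // rnorm_ge0.
have Hf := H 1%N (fun _ => 1) (fun _ => z) (fun _ => dz).
have E : lpnorm +oo%E (fun _ : 'I_1 => rnorm (1 : C) * rnorm ('D_1 f z)) = rnorm ('D_1 f z).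
  by rewrite /= rnorm1 mul1r max1 ?rnorm_ge0.
rewrite E in Hf.
have Hs : sup (Sset +oo%E (fun _ : 'I_1 => (1 : C)) (fun _ => z)) <= (1 - rnorm z ^+ 2)^-1.
  apply: Sset_le => g gb; rewrite /= rnorm1 mul1r max1 ?rnorm_ge0 //.
  exact: ball_bound.
have := le_trans Hf (ler_wpM2l c0 Hs).
move=> H2; rewrite /bloch_val.
apply: le_trans (ler_wpM2l (ltW h1) H2) _.
by rewrite mulrCA mulfV ?gt_eqF // mulr1.
Qed.


Lemma bloch_le_pB (f : C -> X) z : Bloch f -> disc z -> bloch_val f z <= pB f.
Proof.
move=> [hol [M HM]] dz; apply: sup_upper_bound; last by exists z.
split; first by exists (bloch_val f z), z.
by exists M => _ [w dw <-]; apply: HM.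
Qed.

Lemma bloch_val_ge0 (f : C -> X) z : disc z -> 0 <= bloch_val f z.
Proof.
move=> /discP hz; rewrite /bloch_val mulr_ge0 ?rnorm_ge0 //.
by rewrite subr_ge0 ltW // sq_lt1 // rnorm_ge0.
Qed.

Lemma pB_ge0 (f : C -> X) : Bloch f -> 0 <= pB f.
Proof. by move=> bf; apply: le_trans (@bloch_val_ge0 f 0 (@disc0 R)) (bloch_le_pB bf (@disc0 R)). Qed.

Lemma bloch_to_inf (f : C -> X) : Bloch f -> summing_const +oo%E f (pB f).
Proof.
move=> bf; split; first exact: pB_ge0.
move=> n lam z dz.
apply: bigmax_le; first by apply: mulr_ge0; [exact: pB_ge0 | exact: (@Sset_ge0 R +oo%E n lam z)].
move=> j.
have D := mob_D (dz j).
set g := mob (z j).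
have E : rnorm ('D_1 f (z j)) = bloch_val f (z j) * rnorm ('D_1 g (z j)).
  rewrite /bloch_val; transitivity (rnorm ('D_1 f (z j)) * ((1 - rnorm (z j) ^+ 2) * rnorm ('D_1 g (z j)))).
    by rewrite D mulr1.
  by rewrite /g; ring.
rewrite E.
try move=> _.
apply: (@le_mid (pB f * (rnorm (lam j) * rnorm ('D_1 g (z j))))).
  rewrite mulrA (mulrC (rnorm (lam j))) -mulrA; apply: ler_wpM2r.
    by rewrite mulr_ge0 ?rnorm_ge0.
  exact: bloch_le_pB.
apply: ler_wpM2l; first exact: pB_ge0.
apply: (@le_mid (lpnorm +oo%E (fun i => rnorm (lam i) * rnorm ('D_1 g (z i))))).
  exact: (bigmax_ge (fun i => rnorm (lam i) * rnorm ('D_1 g (z i)))).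
apply: (@Sset_ub R +oo%E n lam z g) => //.
exact: mob_ball.
Qed.

Lemma lp1 (r u : R) : 0 < r -> 0 <= u -> lpnorm r%:E (fun _ : 'I_1 => u) = u.
Proof.
move=> r0 u0; rewrite /= big_ord1 -powRrM mulfV ?gt_eqF // powRr1 //.
Qed.

Lemma transfer (p q : \bar R) (f : C -> X) c : (1 <= p)%E -> (p < q)%E ->
  summing_const p f c -> summing_const q f c.
Proof.
case: p => [p'| |]; last by rewrite leeNy_eq.
2: by move=> _; rewrite ltNge leey.
case: q => [q'| |]; last by move=> _; rewrite ltNge leNye.
all: rewrite ?lee_fin ?lte_fin => p1 pq [c0 H]; split; first exact: c0.
all: move=> n lam z dz.
-
  have p0 : 0 < p' by apply: lt_le_trans p1.
  have q0 : 0 < q' by apply: lt_trans pq.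
  pose a i := rnorm (lam i) * rnorm ('D_1 f (z i)).
  have a0 i : 0 <= a i by rewrite mulr_ge0 ?rnorm_ge0.
  have [HK HA] := holder_key p1 pq a0.
  pose t i := a i `^ (q' / p' - 1).
  pose lam' i : C := lam i * (t i)%:C%C.
  have rl i : rnorm (lam' i) = rnorm (lam i) * t i.
    by rewrite /lam' rnormM rnormC ger0_norm // powR_ge0.
  have Hl := H n lam' z dz.
  have EL : lpnorm p'%:E (fun i => rnorm (lam' i) * rnorm ('D_1 f (z i))) =
            (\sum_i a i `^ q') `^ p'^-1.
    rewrite -HA /=; congr (_ `^ _); apply: eq_bigr => i _; congr (_ `^ _).
    by rewrite rl /a /t; ring.
  rewrite EL in Hl.
  pose A := \sum_i a i `^ q'.
  have A0 : 0 <= A by apply: sumr_ge0 => i _; apply: powR_ge0.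
  have S0 : 0 <= sup (Sset q'%:E lam z) by apply: Sset_ge0; rewrite ?lte_fin.
  have HS : sup (Sset p'%:E lam' z) <= sup (Sset q'%:E lam z) * A `^ (p'^-1 - q'^-1).
    apply: Sset_le => g gb.
    pose b i := rnorm (lam i) * rnorm ('D_1 g (z i)).
    have b0 i : 0 <= b i by rewrite mulr_ge0 ?rnorm_ge0.
    have E2 : lpnorm p'%:E (fun i => rnorm (lam' i) * rnorm ('D_1 g (z i))) =
       (\sum_i (b i * a i `^ (q' / p' - 1)) `^ p') `^ p'^-1.
      rewrite /=; congr (_ `^ _); apply: eq_bigr => i _; congr (_ `^ _).
      by rewrite rl /b /t; ring.
    rewrite E2; apply: le_trans (HK b b0) _.
    apply: ler_wpM2r; first exact: powR_ge0.
    exact: (@Sset_ub R q'%:E n lam z g).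
  have Hl2 := le_trans Hl (ler_wpM2l c0 HS).
  change (lpnorm q'%:E a <= c * sup (Sset q'%:E lam z)).
  change (A `^ q'^-1 <= c * sup (Sset q'%:E lam z)).
  have [Az|Ap] := eqVneq A 0.
    rewrite Az powR0; first exact: (mulr_ge0 c0 S0).
    by rewrite invr_eq0 gt_eqF.
  have Apos : 0 < A by rewrite lt_neqAle eq_sym Ap A0.
  have Ae : 0 < A `^ (p'^-1 - q'^-1) by apply: powR_gt0.
  rewrite -(ler_pM2r Ae) -powRD; last by rewrite Ap implybT.
  have -> : q'^-1 + (p'^-1 - q'^-1) = p'^-1 by rewrite addrC subrK.
  rewrite -mulrA; exact: Hl2.
-
  have p0 : 0 < p' by apply: lt_le_trans p1.
  apply: bigmax_le; first by apply: mulr_ge0 => //; exact: (@Sset_ge0 R +oo%E n lam z).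
  move=> j; try move=> _.
  have Hj := H 1%N (fun _ => lam j) (fun _ => z j) (fun _ => dz j).
  rewrite lp1 ?mulr_ge0 ?rnorm_ge0 // in Hj.
  have HS : sup (Sset p'%:E (fun _ : 'I_1 => lam j) (fun _ => z j)) <= sup (Sset +oo%E lam z).
    apply: Sset_le => g gb.
    rewrite lp1 ?mulr_ge0 ?rnorm_ge0 //.
    apply: le_trans (bigmax_ge (fun i => rnorm (lam i) * rnorm ('D_1 g (z i))) j) _.
    exact: (@Sset_ub R +oo%E n lam z g).
  exact: le_trans Hj (ler_wpM2l c0 HS).
Qed.
End S.

Unset Implicit Arguments. Set Strict Implicit.
Theorem proposition1p1 (R : realType) (X : completeNormedModType R[i]) :
  (forall p q : \bar R, (1 <= p)%E -> (p < q)%E ->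
     @PiB R X p `<=` @PiB R X q /\
     (forall f, @PiB R X p f -> piB q f <= piB p f)) /\
  (@PiB R X +oo%E = @Bloch R X /\
     (forall f, @PiB R X +oo%E f -> piB +oo%E f = pB f)).
Proof.
split.
  move=> p q p1 pq; split.
    by move=> f [hol [c Hc]]; split => //; exists c; exact: (transfer p1 pq Hc).
  move=> f [hol [c Hc]].
  rewrite /piB; apply: lb_le_inf; first by exists c.
  move=> c' Hc'.
  apply: ge_inf; last exact: (transfer p1 pq Hc').
  by exists 0 => y [y0 _].
have E : @PiB R X +oo%E = @Bloch R X.
  apply/seteqP; split.
    move=> f [hol [c Hc]]; split => //; exists c => z dz.
    exact: (inf_to_bloch Hc dz).
  move=> f bf; split; first exact: bf.1.
  by exists (pB f); exact: bloch_to_inf.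
split => // f Pf.
have bf : Bloch f by rewrite -E.
move: Pf => [hol [c Hc]].
apply/eqP; rewrite eq_le; apply/andP; split.
  apply: ge_inf; last exact: bloch_to_inf.
  by exists 0 => y [y0 _].
rewrite /piB; apply: lb_le_inf; first by exists c.
move=> c' Hc'; apply: ge_sup.
  by exists (bloch_val f 0), 0 => //; exact: disc0.
by move=> _ [z dz <-]; exact: (inf_to_bloch Hc' dz).
Qed.
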